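(* Let $K$ be a field, $X$ a finite connected poset, $\varphi$ an elementary Lie automorphism of $I(X,K)$, $\theta=\theta_\varphi$, $\sigma=\sigma_\varphi$, and $x<y<z$ in $X$. Then either $\theta(e_{xz})=\theta(e_{xy})\theta(e_{yz})$, in which case $\sigma(x,z)=\sigma(x,y)\sigma(y,z)$, or $\theta(e_{xz})=\theta(e_{yz})\theta(e_{xy})$, in which case $\sigma(x,z)=-\sigma(x,y)\sigma(y,z)$.
   Context: $I(X,K)$ is the incidence algebra: functions $f:X\times X\to K$ with $f(x,y)=0$ unless $x\le y$, product $(fg)(x,y)=\sum_{x\le t\le y}f(x,t)g(t,y)$; $e_{xy}$ ($x\le y$) is the basis element equal to $1$ at $(x,y)$ and $0$ elsewhere. $B=\{e_{xy}:x<y\}$, $X^2_<=\{(x,y):x<y\}$. A Lie automorphism is a bijective linear map preserving $[f,g]=fg-gf$. With $l(\lfloor x,y\rfloor)$ the maximal length of a chain in $\{z:x\le z\le y\}$ and $L_i=\mathrm{span}_K\{e_{xy}:l(\lfloor x,y\rfloor)=i\}$, for a Lie automorphism $\psi$ let $\widetilde\psi$ send $e_{xy}\in L_i$ to the $L_i$-component of $\psi(e_{xy})$. A Lie automorphism $\varphi$ is elementary if $\varphi=\widetilde\psi$ for some Lie automorphism $\psi$ (equivalently $\varphi(L_i)\subseteq L_i$ for all $i$). For elementary $\varphi$, for each $x<y$ there are a unique $e_{uv}\in B$ and a unique $k\in K^*$ with $\varphi(e_{xy})=k e_{uv}$; set $\theta_\varphi(e_{xy})=e_{uv}$ and $\sigma_\varphi(x,y)=k$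 (then $\theta_\varphi:B\to B$ is a bijection). Connected means any two elements are joined by a sequence in which consecutive elements are in a covering relation. *)

(* Defs.v *)
From HB Require Import structures.
From mathcomp Require Import all_boot all_order all_algebra.
Set Implicit Arguments. Unset Strict Implicit. Unset Printing Implicit Defensive.
Import Order.TTheory GRing.Theory.
Local Open Scope ring_scope.

Section Incidence.
Context {d : Order.disp_t} (X : finPOrderType d) (K : fieldType).

(* Ambient space of functions X x X -> K; the incidence algebra I(X,K) is the
   subspace of those f with f(x,y) = 0 unless x <= y. *)
Local Notation inc := {ffun X * X -> K}.

Definition in_I (f : inc) : bool :=
  [forall p : X * X, ~~ (p.1 <= p.2)%O ==> (f p == 0)].

Definition imul (f g : inc) : inc :=
  [ffun p : X * X => \sum_(t : X | (p.1 <= t)%O && (t <= p.2)%O)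
                       f (p.1, t) * g (t, p.2)].

Definition lie (f g : inc) : inc := imul f g - imul g f.

Definition iscale (a : K) (f : inc) : inc := [ffun p => a * f p].

Definition ebas (x y : X) : inc := [ffun p => if p == (x, y) then 1 else 0].

Definition ilen (x y : X) : nat :=
  \max_(C : {set X} | [forall a in C, (x <= a)%O && (a <= y)%O] &&
                      [forall a in C, forall b in C, (a >=< b)%O]) #|C|.-1.

(* f belongs to L_i = span{ e_xy : l(|_x,y_|) = i } *)
Definition inL (i : nat) (f : inc) : bool :=
  [forall p : X * X, (f p != 0) ==> ((p.1 <= p.2)%O && (ilen p.1 p.2 == i))].

Definition lie_aut (phi : inc -> inc) : Prop :=
  [/\ (forall f, in_I f -> in_I (phi f)),
      (forall (a : K) f g, in_I f -> in_I g -> phi (iscale a f + g) = iscale a (phi f) + phi g),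
      (forall f g, in_I f -> in_I g -> phi f = phi g -> f = g),
      (forall g, in_I g -> exists2 f, in_I f & phi f = g) &
      (forall f g, in_I f -> in_I g -> phi (lie f g) = lie (phi f) (phi g))].

Definition elementary (phi : inc -> inc) : Prop :=
  lie_aut phi /\ (forall i f, inL i f -> inL i (phi f)).

(* theta_phi(e_xy) = e_uv where phi(e_xy) = k e_uv, u < v, k <> 0;
   represented by the pair (u,v) *)
Definition theta (phi : inc -> inc) (x y : X) : X * X :=
  odflt (x, y) [pick p : X * X | [&& (p.1 < p.2)%O, phi (ebas x y) p != 0 &
                     phi (ebas x y) == iscale (phi (ebas x y) p) (ebas p.1 p.2)]].

Definition sigma (phi : inc -> inc) (x y : X) : K :=
  phi (ebas x y) (theta phi x y).

Definition covers (a b : X) : bool :=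
  (a < b)%O && [forall c : X, ~~ ((a < c)%O && (c < b)%O)].

Definition connected_poset : Prop :=
  forall a b : X, exists s : seq X,
    path (fun u v => covers u v || covers v u) a s && (last a s == b).

End Incidence.
Arguments ebas {d X} K x y.

(* Main.v *)
Require Import Defs.
From HB Require Import structures.
From mathcomp Require Import all_boot all_order all_algebra.
Import Order.TTheory GRing.Theory.
Set Implicit Arguments. Unset Strict Implicit. Unset Printing Implicit Defensive.
Local Open Scope ring_scope.

Section Pf.
Context {d : Order.disp_t} (X : finPOrderType d) (K : fieldType).
Local Notation inc := {ffun X * X -> K}.
Local Notation e := (ebas K).
Local Notation in_I := (@in_I _ X K).
Local Notation inL := (@inL _ X K).
Local Notation imul := (@imul _ X K).
Local Notation lie := (@lie _ X K).
Local Notation iscale := (@iscale _ X K).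
Local Notation ilen := (@ilen _ X).


Lemma ffunBE (f g : inc) q : (f - g) q = f q - g q.
Proof. by rewrite !ffunE. Qed.
Lemma ffunDE (f g : inc) q : (f + g) q = f q + g q.
Proof. by rewrite !ffunE. Qed.
Lemma ffun0E q : (0 : inc) q = 0.
Proof. by rewrite !ffunE. Qed.

Lemma inI_P (f : inc) : in_I f -> forall p, ~~ (p.1 <= p.2)%O -> f p = 0.
Proof. by move=> /forallP H p Hp; move/implyP: (H p) => /(_ Hp) /eqP. Qed.

Lemma inI_intro (f : inc) : (forall p, ~~ (p.1 <= p.2)%O -> f p = 0) -> in_I f.
Proof. by move=> H; apply/forallP => p; apply/implyP => Hp; rewrite H. Qed.

Lemma inI0 : in_I (0 : inc).
Proof. by apply: inI_intro => p _; rewrite ffun0E. Qed.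
Lemma inID (f g : inc) : in_I f -> in_I g -> in_I (f + g).
Proof.
move=> Hf Hg; apply: inI_intro => p Hp.
by rewrite ffunDE (inI_P Hf) // (inI_P Hg) // addr0.
Qed.
Lemma inIZ a (f : inc) : in_I f -> in_I (iscale a f).
Proof. by move=> Hf; apply: inI_intro => p Hp; rewrite ffunE (inI_P Hf) // mulr0. Qed.
Lemma inI_e a b : (a <= b)%O -> in_I (e a b).
Proof.
move=> Hab; apply: inI_intro => p Hp; rewrite ffunE; case: eqP => // Ep.
by move: Hp; rewrite Ep /= Hab.
Qed.
Lemma inI_term (f : inc) p : in_I f -> in_I (iscale (f p) (e p.1 p.2)).
Proof.
move=> Hf; apply: inI_intro => q Hq; rewrite !ffunE; case: eqP => [Eq|]; last by rewrite mulr0.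
by rewrite (inI_P Hf) ?mul0r //; move: Hq; rewrite Eq.
Qed.
Lemma inI_sum (s : seq (X * X)) (F : X * X -> inc) :
  (forall p, in_I (F p)) -> in_I (\sum_(p <- s) F p).
Proof.
move=> H; elim: s => [|p s IH]; first by rewrite big_nil; apply: inI0.
by rewrite big_cons; apply: inID.
Qed.

Lemma expand (f : inc) : f = \sum_(p : X * X) iscale (f p) (e p.1 p.2).
Proof.
apply/ffunP => q; rewrite sum_ffunE (bigD1 q) //= big1 ?addr0.
  by rewrite !ffunE -surjective_pairing eqxx mulr1.
by move=> p Hp; rewrite !ffunE -surjective_pairing eq_sym (negbTE Hp) mulr0.
Qed.

Lemma ilen_diag (t : X) : ilen t t = 0%N.
Proof.
apply/eqP; rewrite -leqn0; apply/bigmax_leqP => C /andP[/forallP H _].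
have : (#|C| <= 1)%N.
  rewrite -(cards1 t); apply: subset_leq_card; apply/subsetP => a Ha.
  have /andP[h1 h2] := implyP (H a) Ha.
  by rewrite in_set1; apply/eqP; apply: le_anti; rewrite h1 h2.
by case: #|C| => [|[|n]].
Qed.

Lemma ilen_pos (a b : X) : (a < b)%O -> (0 < ilen a b)%N.
Proof.
move=> ab; have neq := lt_eqF ab.
apply: (@leq_trans #|[set a; b]|.-1); first by rewrite cards2 neq.
apply: (leq_bigmax_cond [set a; b]).
apply/andP; split; apply/forallP => c; apply/implyP; rewrite in_set2 => /orP[]/eqP->.
- by rewrite lexx ltW.
- by rewrite lexx ltW.
- apply/forallP => c'; apply/implyP; rewrite in_set2 => /orP[]/eqP->.
  + exact: comparablexx.
  + by apply: le_comparable; apply: ltW.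
- apply/forallP => c'; apply/implyP; rewrite in_set2 => /orP[]/eqP->.
  + by apply: ge_comparable; apply: ltW.
  + exact: comparablexx.
Qed.

Lemma ilen0 (a b : X) : (a <= b)%O -> (ilen a b == 0%N) = (a == b).
Proof.
move=> ab; case: (eqVneq a b) => [->|neq]; first by rewrite ilen_diag.
have : (a < b)%O by rewrite lt_neqAle neq ab.
by move/ilen_pos; rewrite lt0n => /negbTE.
Qed.

Lemma inL_P i (f : inc) p : inL i f -> f p != 0 -> (p.1 <= p.2)%O && (ilen p.1 p.2 == i).
Proof. by move=> /forallP H; move/implyP: (H p). Qed.

Lemma inL_e (a b : X) : (a <= b)%O -> inL (ilen a b) (e a b).
Proof.
move=> ab; apply/forallP => p; apply/implyP; rewrite ffunE.
case: (eqVneq p (a, b)) => [-> _|_]; first by rewrite /= ab eqxx.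
by rewrite eqxx.
Qed.


Lemma imul_er (f : inc) (a b : X) q : (a <= b)%O ->
  imul f (e a b) q = if (q.2 == b) && (q.1 <= a)%O then f (q.1, a) else 0.
Proof.
move=> ab; rewrite ffunE.
rewrite (eq_bigr (fun t => if t == a then (if q.2 == b then f (q.1, a) else 0) else 0)); last first.
  move=> t _; rewrite ffunE xpair_eqE; case: (eqVneq t a) => [->|ne] /=; last by rewrite mulr0.
  by case: (q.2 == b); rewrite ?mulr1 ?mulr0.
rewrite big_mkcond /= (bigD1 a) //= eqxx big1 ?addr0; last first.
  by move=> t /negbTE ->; case: ifP.
case: (eqVneq q.2 b) => [E|ne]; rewrite ?andbF ?andbT /=; last by case: ifP.
by rewrite E ab andbT.
Qed.

Lemma imul_el (g : inc) (a b : X) q : (a <= b)%O ->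
  imul (e a b) g q = if (q.1 == a) && (b <= q.2)%O then g (b, q.2) else 0.
Proof.
move=> ab; rewrite ffunE.
rewrite (eq_bigr (fun t => if t == b then (if q.1 == a then g (b, q.2) else 0) else 0)); last first.
  move=> t _; rewrite ffunE xpair_eqE; case: (eqVneq t b) => [->|ne] /=; last by rewrite andbF mul0r.
  by rewrite andbT; case: (q.1 == a); rewrite ?mul1r ?mul0r.
rewrite big_mkcond /= (bigD1 b) //= eqxx big1 ?addr0; last first.
  by move=> t /negbTE ->; case: ifP.
case: (eqVneq q.1 a) => [E|ne]; rewrite ?andbF ?andbT /=; last by case: ifP.
by rewrite E ab.
Qed.

Lemma imul_ee (a b c d' : X) : (a <= b)%O -> (c <= d')%O ->
  imul (e a b) (e c d') = if b == c then e a d' else 0.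
Proof.
move=> ab cd; apply/ffunP => -[q1 q2]; rewrite imul_el //= ffunE xpair_eqE.
case: (eqVneq b c) => [E|ne] /=; last by rewrite ffun0E; case: ifP.
rewrite ffunE xpair_eqE /=.
case: (eqVneq q1 a) => [_|ne1] //=.
case: (eqVneq q2 d') => [->|ne2] //=; last by case: ifP.
by rewrite E cd.
Qed.

Lemma lie_euu (c : inc) (u : X) q : in_I c ->
  lie (e u u) c q = ((if q.1 == u then 1 else 0) - (if q.2 == u then 1 else 0)) * c q.
Proof.
move=> Hc; rewrite /Defs.lie ffunBE imul_el // imul_er // mulrBl.
congr (_ - _).
- case: (eqVneq q.1 u) => [E|ne] /=; last by rewrite mul0r.
  rewrite mul1r; case: ifP => h; first by rewrite -E -surjective_pairing.
  by rewrite (inI_P Hc) // E h.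
- case: (eqVneq q.2 u) => [E|ne] /=; last by rewrite ?andbF mul0r.
  rewrite mul1r ?andbT; case: ifP => h; first by rewrite -E -surjective_pairing.
  by rewrite (inI_P Hc) // E h.
Qed.

Lemma lie_diag_e (f : inc) (x y : X) : (x < y)%O -> (forall p, p.1 != p.2 -> f p = 0) ->
  lie f (e x y) = iscale (f (x, x) - f (y, y)) (e x y).
Proof.
move=> xy Hf; apply/ffunP => -[q1 q2].
rewrite /Defs.lie ffunBE imul_er ?imul_el ?(ltW xy) //= !ffunE xpair_eqE mulrBl.
case: (eqVneq q1 x) => [->|n1]; case: (eqVneq q2 y) => [->|n2] /=;
  rewrite ?lexx ?mulr1 ?mulr0 ?subr0 ?sub0r //.
- by case: ifP => _; rewrite ?oppr0 // Hf ?oppr0 // eq_sym.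
- by case: ifP => _; rewrite // Hf.
Qed.

Lemma imul_ZZ a b (f g : inc) : imul (iscale a f) (iscale b g) = iscale (a * b) (imul f g).
Proof.
apply/ffunP => q; rewrite !ffunE mulr_sumr; apply: eq_bigr => t _.
by rewrite !ffunE mulrACA.
Qed.

Lemma iscaleB k (f g : inc) : iscale k f - iscale k g = iscale k (f - g).
Proof. by apply/ffunP => q; rewrite !ffunE mulrBr. Qed.

Lemma iscaleN k (f : inc) : iscale k (- f) = iscale (- k) f.
Proof. by apply/ffunP => q; rewrite !ffunE mulrN mulNr. Qed.

Lemma iscale1 (f : inc) : iscale 1 f = f.
Proof. by apply/ffunP => p; rewrite ffunE mul1r. Qed.

Lemma iscale_e_eq k k' (u v a b : X) : k != 0 ->
  iscale k (e u v) = iscale k' (e a b) -> (u, v) = (a, b) /\ k = k'.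
Proof.
move=> kn H; have := congr1 (fun h : inc => h (u, v)) H; rewrite /= !ffunE eqxx mulr1.
case: eqVneq => [E|_]; first by rewrite mulr1.
by rewrite mulr0 => /eqP; rewrite (negbTE kn).
Qed.

Lemma lie_ee (x y z : X) : (x < y)%O -> (y < z)%O -> lie (e x y) (e y z) = e x z.
Proof.
move=> xy yz; have xz := lt_trans xy yz.
by rewrite /Defs.lie !imul_ee ?(ltW xy) ?(ltW yz) // eqxx eq_sym (lt_eqF xz) subr0.
Qed.

Section Phi.
Variable phi : inc -> inc.
Hypothesis Hel : elementary phi.

Lemma phiI f : in_I f -> in_I (phi f).
Proof. by case: Hel => -[H _ _ _ _] _; apply: H. Qed.
Lemma phi_lin a f g : in_I f -> in_I g -> phi (iscale a f + g) = iscale a (phi f) + phi g.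
Proof. by case: Hel => -[_ H _ _ _] _; apply: H. Qed.
Lemma phi_inj f g : in_I f -> in_I g -> phi f = phi g -> f = g.
Proof. by case: Hel => -[_ _ H _ _] _; apply: H. Qed.
Lemma phi_surj g : in_I g -> exists2 f, in_I f & phi f = g.
Proof. by case: Hel => -[_ _ _ H _] _; apply: H. Qed.
Lemma phi_lie f g : in_I f -> in_I g -> phi (lie f g) = lie (phi f) (phi g).
Proof. by case: Hel => -[_ _ _ _ H] _; apply: H. Qed.
Lemma phi_L i f : inL i f -> inL i (phi f).
Proof. by case: Hel => _ H; apply: H. Qed.

Lemma phi0 : phi 0 = 0.
Proof.
have := phi_lin 1 inI0 inI0; rewrite !iscale1 addr0 => H.
by apply: (addrI (phi 0)); rewrite addr0 -H.
Qed.

Lemma phiD f g : in_I f -> in_I g -> phi (f + g) = phi f + phi g.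
Proof. by move=> Hf Hg; rewrite -{1}(iscale1 f) phi_lin // iscale1. Qed.
Lemma phiZ a f : in_I f -> phi (iscale a f) = iscale a (phi f).
Proof. by move=> Hf; rewrite -[iscale a f]addr0 phi_lin ?inI0 // phi0 addr0. Qed.

Lemma phi_sum (s : seq (X * X)) (F : X * X -> inc) :
  (forall p, in_I (F p)) -> phi (\sum_(p <- s) F p) = \sum_(p <- s) phi (F p).
Proof.
move=> H; elim: s => [|p s IH]; first by rewrite !big_nil phi0.
by rewrite !big_cons phiD ?IH //; apply: inI_sum.
Qed.

Lemma phi_expand f : in_I f -> phi f = \sum_(p : X * X) iscale (f p) (phi (e p.1 p.2)).
Proof.
move=> Hf; rewrite {1}(expand f) phi_sum; last by move=> p; apply: inI_term.
apply: eq_bigr => p _.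
case: (boolP (p.1 <= p.2)%O) => Hp; first by rewrite phiZ //; apply: inI_e.
rewrite (inI_P Hf Hp).
have -> : iscale 0 (e p.1 p.2) = 0 by apply/ffunP => q; rewrite !ffunE mul0r.
by rewrite phi0; apply/ffunP => q; rewrite !ffunE mul0r.
Qed.

Lemma phi_e_zero p q : (p.1 <= p.2)%O -> (p.1 == p.2) != (q.1 == q.2) ->
  phi (e p.1 p.2) q = 0.
Proof.
move=> Hp Hne; apply/eqP; apply: contraTT Hne => Hq.
have /andP[Hq1 /eqP Hq2] := inL_P (phi_L (inL_e Hp)) Hq.
by rewrite negbK -(ilen0 Hp) -(ilen0 Hq1) Hq2 eqxx.
Qed.

Definition diagpart (f : inc) : inc := [ffun p => if p.1 == p.2 then f p else 0].

Lemma diag_surj u : exists f : inc,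
  [/\ in_I f, (forall p, p.1 != p.2 -> f p = 0) & phi f = e u u].
Proof.
have [f0 Hf0 Ef0] := phi_surj (inI_e (lexx u)).
have HfD : in_I (diagpart f0).
  apply: inI_intro => p Hp; rewrite ffunE; case: eqP => // E.
  by rewrite (inI_P Hf0 Hp).
exists (diagpart f0); split => //.
  by move=> p /negbTE H; rewrite ffunE H.
apply/ffunP => q; case: (boolP (q.1 == q.2)) => Hq.
  rewrite -Ef0 (phi_expand HfD) (phi_expand Hf0) !sum_ffunE.
  apply: eq_bigr => p _; rewrite !ffunE.
  case: (boolP (p.1 == p.2)) => Hp //.
  case: (boolP (p.1 <= p.2)%O) => Hle; last by rewrite (inI_P Hf0 Hle) !mul0r.
  have Hn : (p.1 == p.2) != (q.1 == q.2) by rewrite (negbTE Hp) Hq.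
  by rewrite (phi_e_zero Hle Hn) !mulr0.
rewrite (phi_expand HfD) sum_ffunE big1; last first.
  move=> p _; rewrite !ffunE; case: (boolP (p.1 == p.2)) => Hp; last by rewrite mul0r.
  have Hle : (p.1 <= p.2)%O by rewrite (eqP Hp) lexx.
  have Hn : (p.1 == p.2) != (q.1 == q.2) by rewrite Hp (negbTE Hq).
  by rewrite (phi_e_zero Hle Hn) !mulr0.
rewrite ffunE; case: eqP => // Eq; by move: Hq; rewrite Eq /= eqxx.
Qed.


Lemma support (x y u : X) p q : (x < y)%O ->
  phi (e x y) p != 0 -> phi (e x y) q != 0 -> p.1 != p.2 ->
  (p.1 == u) || (p.2 == u) -> (q.1 == u) || (q.2 == u).
Proof.
move=> xy Hp Hq pne pu.
have Hexy : in_I (e x y) := inI_e (ltW xy).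
have Hc : in_I (phi (e x y)) := phiI Hexy.
have [f [Hf Hfd Ef]] := diag_surj u.
set s := f (x, x) - f (y, y).
have L : lie (e u u) (phi (e x y)) = iscale s (phi (e x y)).
  by rewrite -Ef -phi_lie // lie_diag_e // phiZ.
have Lp := congr1 (fun h : inc => h p) L; have Lq := congr1 (fun h : inc => h q) L.
rewrite /= lie_euu // ffunE in Lp; rewrite /= lie_euu // ffunE in Lq.
have {}Lp := mulIf Hp Lp.
have sne : s != 0.
  rewrite -Lp; case/orP: pu => /eqP E.
  - have n2 : (p.2 == u) = false by rewrite -E eq_sym (negbTE pne).
    by rewrite E eqxx n2 subr0 oner_eq0.
  - have n1 : (p.1 == u) = false by rewrite -E (negbTE pne).
    by rewrite E eqxx n1 sub0r oppr_eq0 oner_eq0.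
apply: contraTT sne; rewrite negb_or => /andP[/negbTE n1 /negbTE n2].
move: Lq; rewrite n1 n2 subrr mul0r => /esym /eqP; rewrite mulf_eq0 (negbTE Hq) orbF => -> //.
Qed.

Lemma phi_e_shape (x y : X) : (x < y)%O ->
  exists u v k, [/\ (u < v)%O, k != 0 & phi (e x y) = iscale k (e u v)].
Proof.
move=> xy.
have Hexy : in_I (e x y) := inI_e (ltW xy).
have cne : phi (e x y) != 0.
  apply/eqP => c0; have := phi_inj Hexy inI0; rewrite c0 phi0 => /(_ erefl) /ffunP /(_ (x, y)).
  by rewrite !ffunE eqxx => /eqP; rewrite oner_eq0.
have [p Hp] : exists p, phi (e x y) p != 0.
  apply/existsP; apply: contraNT cne => /existsPn H; apply/eqP/ffunP => q.
  by rewrite ffun0E; apply/eqP; move: (H q); rewrite negbK.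
have [Hp1 /eqP Hp2] := andP (inL_P (phi_L (inL_e (ltW xy))) Hp).
have pne : p.1 != p.2 by rewrite -(ilen0 Hp1) Hp2 -lt0n ilen_pos.
have plt : (p.1 < p.2)%O by rewrite lt_neqAle pne Hp1.
exists p.1, p.2, (phi (e x y) p); split => //.
apply/ffunP => q; rewrite !ffunE.
case: (eqVneq q (p.1, p.2)) => [->|nq]; first by rewrite -surjective_pairing mulr1.
rewrite mulr0; apply/eqP; apply: contraTT nq => Hq; rewrite negbK.
have [Hq1 /eqP Hq2] := andP (inL_P (phi_L (inL_e (ltW xy))) Hq).
have qne : q.1 != q.2 by rewrite -(ilen0 Hq1) Hq2 -lt0n ilen_pos.
have h1 : (q.1 == p.1) || (q.2 == p.1) by apply: (support xy Hp Hq pne); rewrite eqxx.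
have h2 : (q.1 == p.2) || (q.2 == p.2) by apply: (support xy Hp Hq pne); rewrite eqxx orbT.
case/orP: h1 => /eqP E1; case/orP: h2 => /eqP E2.
- by move: pne; rewrite -E1 -E2 eqxx.
- by apply/eqP; rewrite -E1 -E2 -surjective_pairing.
- by move: Hq1; rewrite E1 E2 => /(lt_le_trans plt); rewrite ltxx.
- by move: pne; rewrite -E1 -E2 eqxx.
Qed.

Lemma theta_spec (x y u v : X) k : (u < v)%O -> k != 0 ->
  phi (e x y) = iscale k (e u v) ->
  theta phi x y = (u, v) /\ sigma phi x y = k.
Proof.
move=> uv kn E.
have Eth : theta phi x y = (u, v).
  rewrite /theta; case: pickP => [p /and3P [_ Hp _] | H] /=.
    move: Hp; rewrite E !ffunE; case: (eqVneq p (u, v)) => // _.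
    by rewrite mulr0 eqxx.
  by move: (H (u, v)); rewrite /= uv E !ffunE eqxx mulr1 kn eqxx.
by split => //; rewrite /sigma Eth E !ffunE eqxx mulr1.
Qed.

Lemma main_sec (x y z : X) : (x < y)%O -> (y < z)%O ->
  (e (theta phi x z).1 (theta phi x z).2 =
     imul (e (theta phi x y).1 (theta phi x y).2)
          (e (theta phi y z).1 (theta phi y z).2)
   /\ sigma phi x z = sigma phi x y * sigma phi y z)
  \/
  (e (theta phi x z).1 (theta phi x z).2 =
     imul (e (theta phi y z).1 (theta phi y z).2)
          (e (theta phi x y).1 (theta phi x y).2)
   /\ sigma phi x z = - (sigma phi x y * sigma phi y z)).
Proof.
move=> xy yz; have xz := lt_trans xy yz.
have [a [b [k1 [ab k1n E1]]]] := phi_e_shape xy.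
have [c [d' [k2 [cd k2n E2]]]] := phi_e_shape yz.
have [u [v [k3 [uv k3n E3]]]] := phi_e_shape xz.
have [T1 S1] := theta_spec ab k1n E1.
have [T2 S2] := theta_spec cd k2n E2.
have [T3 S3] := theta_spec uv k3n E3.
rewrite T1 T2 T3 S1 S2 S3 /=.
have key : iscale k3 (e u v) =
    iscale (k1 * k2) (imul (e a b) (e c d') - imul (e c d') (e a b)).
  rewrite -E3 -(lie_ee xy yz) phi_lie ?inI_e ?(ltW xy) ?(ltW yz) //.
  by rewrite E1 E2 /Defs.lie !imul_ZZ (mulrC k2) iscaleB.
move: key; rewrite !imul_ee ?(ltW ab) ?(ltW cd) //.
case: (eqVneq b c) => [Ebc|nbc].
  have nda : (d' == a) = false.
    have ad : (a < d')%O by rewrite (lt_trans ab) // Ebc.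
    by rewrite eq_sym (lt_eqF ad).
  rewrite nda subr0 => /(iscale_e_eq k3n) [[-> ->] ->].
  by left.
case: (eqVneq d' a) => [Eda|nda]; last first.
  rewrite subrr => H; have := congr1 (fun h : inc => h (u, v)) H.
  by rewrite /= !ffunE eqxx mulr1 mulr0 => /eqP; rewrite (negbTE k3n).
rewrite sub0r iscaleN => /(iscale_e_eq k3n) [[-> ->] ->].
by right.
Qed.

End Phi.
End Pf.

Theorem lemma5p2 (K : fieldType) (d : Order.disp_t) (X : finPOrderType d)
  (phi : {ffun X * X -> K} -> {ffun X * X -> K}) (x y z : X) :
  connected_poset X -> elementary phi -> (x < y)%O -> (y < z)%O ->
  (ebas K (theta phi x z).1 (theta phi x z).2 =
     imul (ebas K (theta phi x y).1 (theta phi x y).2)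
          (ebas K (theta phi y z).1 (theta phi y z).2)
   /\ sigma phi x z = sigma phi x y * sigma phi y z)
  \/
  (ebas K (theta phi x z).1 (theta phi x z).2 =
     imul (ebas K (theta phi y z).1 (theta phi y z).2)
          (ebas K (theta phi x y).1 (theta phi x y).2)
   /\ sigma phi x z = - (sigma phi x y * sigma phi y z)).
Proof. by move=> _ Hel xy yz; apply: main_sec. Qed.
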